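(* Let $\alpha\colon\mathbb{R}\to\mathbb{R}$ be continuous, $\eta(w)=w+\frac{\alpha(w)}{2}$, and $S_\alpha=\bigcup_{w\in\mathbb{R}}[(-1,-\alpha(w),\eta(w)),(1,\alpha(w),\eta(w))]$. Then $S_\alpha$ is a graphical strip over $K$ if and only if $\frac{\alpha(w_2)-\alpha(w_1)}{w_2-w_1}\ge-2$ for all $w_1<w_2$ and $\eta(\mathbb{R})=\mathbb{R}$.
   Context: $\mathbb{H}$ is $\mathbb{R}^3$ with product $(x,y,z)\cdot(x',y',z')=(x+x',y+y',z+z'+\frac{xy'-yx'}{2})$; $Y^t=(0,t,0)$. A horizontal line is a set $\{p\cdot tv:t\in\mathbb{R}\}$, $v=(a,b,0)\neq0$; a ruled surface is a union of horizontal segments (rulings) with endpoints in its boundary. $V_0=\{(x,0,z)\}$; for $D\subset V_0$ and $f\colon D\to\mathbb{R}$, $\Gamma_f=\{u\cdot Y^{f(u)}:u\in D\}$. A graphical strip over $D$ is an intrinsic graph $\Gamma_f$ of a continuous $f\colon D\to\mathbb{R}$ which is ruled and all of whose rulings intersect the $z$-axis. $K=\{(x,0,z):-1\le x\le1\}$. $[p_1,p_2]$ is the line segment from $p_1$ to $p_2$. *)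

(* Defs.v *)
From HB Require Import structures.
From mathcomp Require Import all_boot all_order all_algebra.
From mathcomp Require Import all_classical all_reals all_analysis.
Set Implicit Arguments. Unset Strict Implicit. Unset Printing Implicit Defensive.
Import Order.TTheory GRing.Theory Num.Theory.
Import numFieldNormedType.Exports.
Local Open Scope classical_set_scope.
Local Open Scope ring_scope.

Section Heis.
Variable R : realType.

Definition pt := (R * R * R)%type.
Definition px (p : pt) : R := p.1.1.
Definition py (p : pt) : R := p.1.2.
Definition pz (p : pt) : R := p.2.

Definition hmul (p q : pt) : pt :=
  (px p + px q, py p + py q, pz p + pz q + (px p * py q - py p * px q) / 2).

Definition Yt (t : R) : pt := (0, t, 0).

Definition hline (p : pt) (a b : R) : set pt :=
  [set hmul p (t * a, t * b, 0) | t in [set: R]].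

Definition horizontal_line (L : set pt) : Prop :=
  exists p a b, (a != 0 \/ b != 0) /\ L = hline p a b.

Definition segment (p1 p2 : pt) : set pt :=
  [set ((1 - t) * px p1 + t * px p2, (1 - t) * py p1 + t * py p2,
        (1 - t) * pz p1 + t * pz p2) | t in `[0, 1]].

Definition horizontal_segment (p1 p2 : pt) : Prop :=
  p1 <> p2 /\ exists L, horizontal_line L /\ L p1 /\ L p2.

(* V_0 = {(x,0,z)} is identified with R*R via u = (x, z) *)
Definition V0pt (u : R * R) : pt := (u.1, 0, u.2).

Definition graph_pt (f : R * R -> R) (u : R * R) : pt := hmul (V0pt u) (Yt (f u)).

Definition igraph (D : set (R * R)) (f : R * R -> R) : set pt := graph_pt f @` D.

Definition bdry (D : set (R * R)) : set (R * R) := closure D `\` interior D.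

Definition zaxis : set pt := [set p | px p = 0 /\ py p = 0].

(* S is a graphical strip over D: S = Gamma_f for a continuous f : D -> R,
   and S is ruled (union of horizontal segments with endpoints in the
   boundary of Gamma_f, i.e. the image of the boundary of D), with all
   rulings meeting the z-axis. *)
Definition graphical_strip (D : set (R * R)) (S : set pt) : Prop :=
  exists f : R * R -> R,
    {within D, continuous f} /\ S = igraph D f /\
    exists Rul : set (pt * pt),
      (forall r, Rul r ->
         [/\ horizontal_segment r.1 r.2,
             (graph_pt f @` bdry D) r.1,
             (graph_pt f @` bdry D) r.2 &
             segment r.1 r.2 `&` zaxis !=set0]) /\
      S = \bigcup_(r in Rul) segment r.1 r.2.

Definition K : set (R * R) := [set u | -1 <= u.1 <= 1].

Definition eta_ (alpha : R -> R) (w : R) : R := w + alpha w / 2.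

Definition S_alpha (alpha : R -> R) : set pt :=
  \bigcup_(w in [set: R])
     segment (-1, - alpha w, eta_ alpha w) (1, alpha w, eta_ alpha w).

End Heis.

(* Main.v *)
Require Import Defs.
From HB Require Import structures.
From mathcomp Require Import all_boot all_order all_algebra.
From mathcomp Require Import all_classical all_reals all_analysis.
From mathcomp Require Import ring lra.
Import Order.TTheory GRing.Theory Num.Theory.
Import numFieldNormedType.Exports.
Local Open Scope classical_set_scope.
Local Open Scope ring_scope.

Lemma segP (R : realType) (a e : R) (p : pt R) :
  segment (-1, -a, e) (1, a, e) p <-> exists2 s, -1 <= s <= 1 & p = (s, s * a, e).
Proof.
split.
- case=> t; rewrite /= in_itv /= => /andP[t0 t1] <-.
  exists (2 * t - 1); first (apply/andP; split; lra).
  rewrite /px /py /pz /=; congr (_, _, _); ring.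
- case=> s /andP[s0 s1] ->; exists ((s + 1) / 2).
    rewrite /= in_itv /=; apply/andP; split; lra.
  rewrite /px /py /pz /=; congr (_, _, _); by field.
Qed.

Lemma graph_ptE (R : realType) (f : R * R -> R) (u : R * R) :
  graph_pt f u = (u.1, f u, u.2 + u.1 * f u / 2).
Proof. rewrite /graph_pt /hmul /V0pt /Yt /px /py /pz /=; congr (_, _, _); ring. Qed.
Lemma fwd (R : realType) (alpha : R -> R) (f : R * R -> R) :
  S_alpha alpha = igraph (@K R) f ->
  ((forall w1 w2 : R, w1 < w2 -> -2 <= (alpha w2 - alpha w1) / (w2 - w1)) /\
   (forall z : R, exists w : R, eta_ alpha w = z)).
Proof.
move=> HS.
have inS : forall w s, -1 <= s <= 1 -> S_alpha alpha (s, s * alpha w, eta_ alpha w).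
  by move=> w s hs; exists w => //; apply/segP; exists s.
have inG : forall p, S_alpha alpha p -> exists2 u, K u & graph_pt f u = p.
  by rewrite HS => p [u Ku <-]; exists u.
have inS' : forall u, K u -> S_alpha alpha (graph_pt f u).
  by rewrite HS => u Ku; exists u.
split; last first.
  move=> z; have : K (0, z) by rewrite /K /=; apply/andP; split; lra.
  move=> /inS' [w _ /segP [s _]]; rewrite graph_ptE /= => -[_ _ e3].
  by exists w; rewrite -e3 /=; lra.
move=> w1 w2 lt12; rewrite leNgt; apply/negP => H.
have D0 : 0 < w2 - w1 by lra.
move: H; rewrite ltr_pdivrMr // => H.
set a1 := alpha w1 in H *; set a2 := alpha w2 in H *.
set E := 2 * w1 + a1 - 2 * w2 - a2.
have E0 : 0 < E by rewrite /E; lra.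
have DE0 : 0 < 2 * (w2 - w1) + E by lra.
set q := E / (2 * (w2 - w1) + E).
have hq : q * (2 * (w2 - w1) + E) = E by rewrite /q; field; rewrite gt_eqF.
have q0 : 0 < q by rewrite /q divr_gt0.
have q1 : q < 1 by rewrite /q ltr_pdivrMr //; lra.
set s := Num.sqrt q.
have s2 : s * s = q by rewrite -expr2 sqr_sqrtr // ltW.
have s0 : 0 < s by rewrite sqrtr_gt0.
have hs : -1 <= s <= 1 by apply/andP; split; nra.
have [u1 Ku1 e1] := inG _ (inS w1 s hs).
have [u2 Ku2 e2] := inG _ (inS w2 s hs).
move: e1 e2; rewrite !graph_ptE; case: u1 Ku1 => x1 z1 _; case: u2 Ku2 => x2 z2 _ /=.
move=> [ex1 ef1 ez1] [ex2 ef2 ez2].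
have u12 : (x1, z1) = (x2, z2).
  congr pair; first by rewrite ex1 ex2.
  move: ez1 ez2; rewrite /eta_ ef1 ef2 ex1 ex2 -/a1 -/a2 => ez1 ez2.
  have : s * (s * a1) = q * a1 by rewrite mulrA s2.
  have : s * (s * a2) = q * a2 by rewrite mulrA s2.
  move: hq; rewrite /E; nra.
have : s * a2 = s * a1 by move: ef1; rewrite u12 ef2.
move/(mulfI (lt0r_neq0 s0)) => a12. rewrite -/a1 -/a2 in a12.
by move: E0; rewrite /E a12; lra.
Qed.
Definition hh {R : realType} (alpha : R -> R) (w : R) := 2 * w + alpha w.
Definition gg {R : realType} (alpha : R -> R) (x w : R) := w + (1 - x * x) / 2 * alpha w.
Definition WW {R : realType} (alpha : R -> R) (x z : R) := xget 0 [set w | gg alpha x w = z].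
Definition ff {R : realType} (alpha : R -> R) (u : R * R) := u.1 * alpha (WW alpha u.1 u.2).

Lemma ggE {R : realType} (alpha : R -> R) x w :
  gg alpha x w = x * x * w + (1 - x * x) / 2 * hh alpha w.
Proof. rewrite /gg /hh; by field. Qed.

Lemma gg_mono {R : realType} (alpha : R -> R)
  (hm : forall w1 w2, w1 <= w2 -> hh alpha w1 <= hh alpha w2) x w1 w2 :
  -1 <= x <= 1 -> w1 <= w2 -> gg alpha x w1 <= gg alpha x w2.
Proof.
move=> /andP[x0 x1] le12; rewrite !ggE.
have h12 := hm _ _ le12.
have c0 : 0 <= 1 - x * x by nra.
have H1 : 0 <= hh alpha w2 - hh alpha w1 by rewrite subr_ge0.
have := mulr_ge0 c0 H1.
have H2 : 0 <= w2 - w1 by rewrite subr_ge0.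
have xx : 0 <= x * x by rewrite -expr2 sqr_ge0.
have := mulr_ge0 xx H2.
lra.
Qed.

Lemma gg_smono {R : realType} (alpha : R -> R)
  (hm : forall w1 w2, w1 <= w2 -> hh alpha w1 <= hh alpha w2) x w1 w2 :
  x != 0 -> -1 <= x <= 1 -> w1 < w2 -> gg alpha x w1 < gg alpha x w2.
Proof.
move=> xn0 /andP[x0 x1] le12; rewrite !ggE.
have h12 := hm _ _ (ltW le12).
have c0 : 0 <= 1 - x * x by nra.
have H1 : 0 <= hh alpha w2 - hh alpha w1 by rewrite subr_ge0.
have := mulr_ge0 c0 H1.
have H2 : 0 < w2 - w1 by rewrite subr_gt0.
have xx : 0 < x * x by rewrite -expr2 exprn_even_gt0.
have := mulr_gt0 xx H2.
lra.
Qed.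

Lemma gg_cont {R : realType} (alpha : R -> R) (ha : continuous alpha) x :
  continuous (gg alpha x).
Proof.
move=> w; rewrite /gg; apply: cvgD; first exact: cvg_id.
apply: cvgM; first exact: cvg_cst.
exact: ha.
Qed.

Lemma gg_surj {R : realType} (alpha : R -> R) (ha : continuous alpha)
  (hm : forall w1 w2, w1 <= w2 -> hh alpha w1 <= hh alpha w2)
  (he : forall z : R, exists w : R, eta_ alpha w = z) x z :
  -1 <= x <= 1 -> exists w, gg alpha x w = z.
Proof.
move=> /andP[x0 x1].
have c0 : 0 <= 1 - x * x by nra.
have [wz ewz] := he z.
have gc : forall a b : R, {within `[a, b], continuous (gg alpha x)}.
  by move=> a b; apply: continuous_subspaceT; exact: gg_cont.
have hz := hm z wz; have hz' := hm wz z.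
move: ewz; rewrite /eta_ => ewz.
have ez : gg alpha x z = z + (1 - x * x) / 2 * alpha z by [].
have ewz' : gg alpha x wz = wz + (1 - x * x) * (z - wz).
  by rewrite /gg; rewrite -ewz; field.
have xx : 0 <= x * x by rewrite -expr2 sqr_ge0.
have [le|lt] := leP z wz.
- have az : alpha z <= 0 by move: (hz le); rewrite /hh; lra.
  have A : gg alpha x z <= z by rewrite ez; nra.
  have B : z <= gg alpha x wz by rewrite ewz'; nra.
  have mm : Num.min (gg alpha x z) (gg alpha x wz) <= z <= Num.max (gg alpha x z) (gg alpha x wz).
    by rewrite ge_min le_max A B orbT.
  have [c _ hc] := @IVT R (gg alpha x) z wz z le (gc _ _) mm.
  by exists c.
- have lt' := ltW lt.
  have az : 0 <= alpha z by move: (hz' lt'); rewrite /hh; lra.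
  have A : z <= gg alpha x z by rewrite ez; nra.
  have B : gg alpha x wz <= z by rewrite ewz'; nra.
  have mm : Num.min (gg alpha x wz) (gg alpha x z) <= z <= Num.max (gg alpha x wz) (gg alpha x z).
    by rewrite ge_min le_max A B orbT.
  have [c _ hc] := @IVT R (gg alpha x) wz z z lt' (gc _ _) mm.
  by exists c.
Qed.

Lemma ggW {R : realType} (alpha : R -> R) (ha : continuous alpha)
  (hm : forall w1 w2, w1 <= w2 -> hh alpha w1 <= hh alpha w2)
  (he : forall z : R, exists w : R, eta_ alpha w = z) x z :
  -1 <= x <= 1 -> gg alpha x (WW alpha x z) = z.
Proof.
by move=> hx; rewrite /WW; have := xgetPex 0 (@gg_surj R alpha ha hm he x z hx).
Qed.
Lemma bdryK {R : realType} (x z : R) : (x = 1 \/ x = -1) -> bdry (@K R) (x, z).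
Proof.
move=> hx; split.
  by apply: subset_closure; rewrite /K /=; case: hx => ->; apply/andP; split; lra.
move=> /= Kn.
have cv : (fun t : R => (t, z)) @ nbhs x --> (nbhs x, nbhs z).
  apply: (@cvg_pair _ _ _ (nbhs x) (nbhs x) (nbhs z)) => //.
  exact: cvg_cst.
have := cv _ Kn; rewrite /= => /nbhs_ballP [e /= e0 he].
case: hx => hx; subst x.
- have : ball (1 : R) e (1 + e / 2).
    by rewrite /ball /= ltr_norml; apply/andP; split; lra.
  by move/he; rewrite /K /= => /andP[_]; lra.
- have : ball (-1 : R) e (-1 - e / 2).
    by rewrite /ball /= ltr_norml; apply/andP; split; lra.
  by move/he; rewrite /K /= => /andP[]; lra.
Qed.

Lemma trap {R : realType} (alpha : R -> R) (ha : continuous alpha)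
  (hm : forall w1 w2, w1 <= w2 -> hh alpha w1 <= hh alpha w2)
  (he : forall z : R, exists w : R, eta_ alpha w = z) (x0 z0 a b : R) :
  gg alpha x0 a < z0 -> z0 < gg alpha x0 b ->
  \forall v \near (x0, z0), K v -> a < WW alpha v.1 v.2 < b.
Proof.
move=> ha0 hb0.
have cv : forall c, (fun v : R * R => gg alpha v.1 c - v.2) @ nbhs (x0, z0) --> gg alpha x0 c - z0.
  move=> c; rewrite /gg; apply: cvgB; last exact: cvg_snd.
  apply: cvgD; first exact: cvg_cst.
  apply: cvgM; last exact: cvg_cst.
  apply: cvgM; last exact: cvg_cst.
  apply: cvgB; first exact: cvg_cst.
  by apply: cvgM; exact: cvg_fst.
near=> v => Kv.
have A : gg alpha v.1 a - v.2 < 0 by near: v; apply: cvgr_lt; [exact: cv | lra].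
have B : 0 < gg alpha v.1 b - v.2 by near: v; apply: cvgr_gt; [exact: cv | lra].
have gw := @ggW R alpha ha hm he v.1 v.2 Kv.
apply/andP; split; rewrite ltNge; apply/negP => H.
- have := @gg_mono R alpha hm _ _ _ Kv H; lra.
- have := @gg_mono R alpha hm _ _ _ Kv H; lra.
Unshelve. all: by end_near.
Qed.

Lemma ff_cont {R : realType} (alpha : R -> R) (ha : continuous alpha)
  (hm : forall w1 w2, w1 <= w2 -> hh alpha w1 <= hh alpha w2)
  (he : forall z : R, exists w : R, eta_ alpha w = z) :
  {within @K R, continuous (ff alpha)}.
Proof.
apply/subspace_continuousP => -[x0 z0] Ku0.
apply/cvgrPdist_lt => e e0.
have cx : (fun v : R * R => v.1) @ nbhs (x0, z0) --> x0 by exact: cvg_fst.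
have Kx0 : -1 <= x0 <= 1 by exact: Ku0.
have nx0 : `|x0| <= 1 by rewrite ler_norml.
rewrite near_withinE.
have [x00|x0n] := eqVneq x0 0.
- subst x0.
  have [w1 ew1] := he (z0 - 1); have [w2 ew2] := he (z0 + 1).
  have g0 : forall w, gg alpha 0 w = eta_ alpha w by move=> w; rewrite /gg /eta_; ring.
  have tr := @trap R alpha ha hm he 0 z0 w1 w2 _ _.
  set M := `|hh alpha w1| + `|hh alpha w2| + 2 * (`|w1| + `|w2|) + 1.
  have M0 : 0 < M by rewrite /M; have := normr_ge0 (hh alpha w1); have := normr_ge0 (hh alpha w2);
    have := normr_ge0 w1; have := normr_ge0 w2; lra.
  near=> v => Kv.
  have /andP[W1 W2] : w1 < WW alpha v.1 v.2 < w2 by move: Kv; near: v; apply: tr; rewrite g0; lra.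
  have hb : `|alpha (WW alpha v.1 v.2)| <= M.
    have h1 := hm _ _ (ltW W1); have h2 := hm _ _ (ltW W2).
    move: h1 h2; rewrite /M /hh ler_norml.
    have := ler_norm (hh alpha w1); have := ler_norm (hh alpha w2);
    have := ler_norm (- hh alpha w1); have := ler_norm (- hh alpha w2);
    have := ler_norm w1; have := ler_norm w2;
    have := ler_norm (- w1); have := ler_norm (- w2); rewrite !normrN /hh.
    move=> *; apply/andP; split; lra.
  have hx : `|v.1| < e / M.
    by near: v; apply: cvgr0_norm_lt; [exact: cx | exact: divr_gt0].
  rewrite /from_subspace /ff /= mul0r sub0r normrN normrM.
  have := normr_ge0 v.1; have := normr_ge0 (alpha (WW alpha v.1 v.2)).
  have : e / M * M = e by field; rewrite gt_eqF.
  nra.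
- set W0 := WW alpha x0 z0.
  have gw0 : gg alpha x0 W0 = z0 := @ggW R alpha ha hm he x0 z0 Kx0.
  have e20 : 0 < e / 2 by lra.
  have := ha W0; move/cvgrPdist_lt/(_ (e / 2) e20) => /nbhs_ballP [d /= d0 hd].
  have tr := @trap R alpha ha hm he x0 z0 (W0 - d / 2) (W0 + d / 2) _ _.
  set M := `|alpha W0| + e / 2.
  have M0 : 0 < M by rewrite /M; have := normr_ge0 (alpha W0); lra.
  near=> v => Kv.
  have /andP[W1 W2] : W0 - d / 2 < WW alpha v.1 v.2 < W0 + d / 2.
    move: Kv; near: v; apply: tr.
      by rewrite -gw0; apply: (@gg_smono R alpha hm) => //; lra.
    by rewrite -gw0; apply: (@gg_smono R alpha hm) => //; lra.
  set W := WW alpha v.1 v.2 in W1 W2 *.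
  have hA : `|alpha W0 - alpha W| < e / 2.
    by apply: hd; rewrite /ball /= ltr_norml; apply/andP; split; lra.
  have hx : `|x0 - v.1| < e / (2 * M).
    by near: v; apply: cvgr_dist_lt; [exact: cx | apply: divr_gt0 => //; lra].
  rewrite /from_subspace /ff /= -/W.
  have -> : x0 * alpha W0 - v.1 * alpha W = x0 * (alpha W0 - alpha W) + (x0 - v.1) * alpha W by ring.
  apply: le_lt_trans (ler_normD _ _) _; rewrite !normrM.
  have hB : `|alpha W| <= M.
    have -> : alpha W = alpha W0 - (alpha W0 - alpha W) by ring.
    by apply: le_trans (ler_normB _ _) _; rewrite /M; lra.
  have p1 := mulr_ge0 (_ : 0 <= 1 - `|x0|) (normr_ge0 (alpha W0 - alpha W)).
  have p2 := mulr_ge0 (normr_ge0 (x0 - v.1)) (_ : 0 <= M - `|alpha W|).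
  have p3 : `|x0 - v.1| * M < e / (2 * M) * M by rewrite ltr_pM2r.
  have p4 : e / (2 * M) * M = e / 2 by field; rewrite gt_eqF.
  have := p1 _; have := p2 _; nra.
Unshelve. all: by end_near.
Qed.

Lemma gg_ends {R : realType} (alpha : R -> R) (ha : continuous alpha)
  (hm : forall w1 w2, w1 <= w2 -> hh alpha w1 <= hh alpha w2)
  (he : forall z : R, exists w : R, eta_ alpha w = z) x z :
  (x = 1 \/ x = -1) -> WW alpha x z = z.
Proof.
move=> hx; have Kx : -1 <= x <= 1 by case: hx => ->; apply/andP; split; lra.
have := @ggW R alpha ha hm he x z Kx; rewrite /gg.
have -> : 1 - x * x = 0 by case: hx => ->; ring.
by rewrite mul0r mul0r addr0.
Qed.

Lemma bwd (R : realType) (alpha : R -> R) (halpha : continuous alpha) :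
  ((forall w1 w2 : R, w1 < w2 -> -2 <= (alpha w2 - alpha w1) / (w2 - w1)) /\
   (forall z : R, exists w : R, eta_ alpha w = z)) ->
  graphical_strip (@K R) (S_alpha alpha).
Proof.
move=> [hs he].
have hm : forall w1 w2, w1 <= w2 -> hh alpha w1 <= hh alpha w2.
  move=> w1 w2; rewrite le_eqVlt => /orP[/eqP->|lt]; first by [].
  have := hs _ _ lt; rewrite ler_pdivlMr ?subr_gt0 // /hh; lra.
have gptE : forall u, K u -> graph_pt (ff alpha) u =
    (u.1, u.1 * alpha (WW alpha u.1 u.2), eta_ alpha (WW alpha u.1 u.2)).
  move=> u Ku; rewrite graph_ptE /ff.
  have gw := @ggW R alpha halpha hm he u.1 u.2 Ku.
  set W := WW alpha u.1 u.2 in gw *.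
  congr (_, _, _); rewrite -gw /gg /eta_; by field.
exists (ff alpha); split; first exact: ff_cont.
split.
  apply/seteqP; split => p.
    case=> w _ /segP [s hs1 ->]; exists (s, gg alpha s w) => //.
    rewrite gptE //=.
    have gw := @ggW R alpha halpha hm he s (gg alpha s w) hs1.
    set W' := WW alpha s (gg alpha s w) in gw *.
    have [s0|sn0] := eqVneq s 0.
      subst s; rewrite !mul0r; congr (_, _, _).
      by move: gw; rewrite /gg /eta_ mul0r subr0 !mul1r; lra.
    have -> : W' = w => //.
    apply: le_anti; apply/andP; split; rewrite leNgt; apply/negP => H;
      have := @gg_smono R alpha hm _ _ _ sn0 hs1 H; lra.
  case=> u Ku <-; rewrite gptE //.
  exists (WW alpha u.1 u.2) => //; apply/segP; exists u.1 => //.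
exists [set r | exists w, r = ((-1, - alpha w, eta_ alpha w), (1, alpha w, eta_ alpha w))].
split.
  move=> r [w ->] /=; split.
  - split; first by case; lra.
    exists (hline (0, 0, eta_ alpha w) 1 (alpha w)); split.
      exists (0, 0, eta_ alpha w), 1, (alpha w); split => //; left; exact: oner_neq0.
    split; [exists (-1) | exists 1] => //; rewrite /hmul /px /py /pz /=;
      congr (_, _, _); ring.
  - have K1 : K (-1, w) by rewrite /K /=; apply/andP; split; lra.
    exists (-1, w); first by apply: bdryK; right.
    rewrite gptE //= (@gg_ends R alpha halpha hm he) ?mulN1r ?mul1r //; by right.
  - have K1 : K (1, w) by rewrite /K /=; apply/andP; split; lra.
    exists (1, w); first by apply: bdryK; left.
    rewrite gptE //= (@gg_ends R alpha halpha hm he) ?mulN1r ?mul1r //; by left.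
  - exists (0, 0, eta_ alpha w); split.
      apply/segP; exists 0; first by apply/andP; split; lra.
      by rewrite mul0r.
    by rewrite /zaxis /px /py.
apply/seteqP; split => p.
  case=> w _ hp; exists ((-1, - alpha w, eta_ alpha w), (1, alpha w, eta_ alpha w)) => //.
  by exists w.
by case=> r [w ->] hp; exists w.
Qed.

Theorem lemma3p1 (R : realType) (alpha : R -> R) (halpha : continuous alpha) :
  graphical_strip (@K R) (S_alpha alpha) <->
  ((forall w1 w2 : R, w1 < w2 -> -2 <= (alpha w2 - alpha w1) / (w2 - w1)) /\
   (forall z : R, exists w : R, eta_ alpha w = z)).
Proof.
split; last exact: bwd.
by case=> f [_ [HS _]]; exact: (@fwd R alpha f HS).
Qed.
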